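(* Consider $M$ access points (APs), each with $N$ antennas and $L\le N$ RF chains, and $K$ single-antenna users (UEs) with transmit powers $p_1,\dots,p_K>0$ and noise power $\sigma^2>0$. For each AP $m$ let $\mathcal{U}_m\subseteq\{1,\dots,K\}$ be the set of UEs it serves, and for each UE $k$ let $\mathcal{F}_k=\{m: k\in\mathcal{U}_m\}$. Let $\boldsymbol{h}_{m,i}\in\mathbb{C}^{N}$ be (perfectly known) channel vectors and $\boldsymbol{R}_{m,i}\in\mathbb{C}^{N\times N}$ Hermitian positive semidefinite matrices. For analog beamformers $\boldsymbol{W}=(\boldsymbol{W}_1,\dots,\boldsymbol{W}_M)$ with $\boldsymbol{W}_m\in\mathbb{C}^{N\times L}$ of full column rank, define the perfect-CSI uplink MMSE SINR of UE $k$ by $$\mathrm{SINR}_k(\boldsymbol{W})=\boldsymbol{g}_k^{*}\Big(\sum_{i\neq k}\bar{\boldsymbol{g}}_{k,i}\bar{\boldsymbol{g}}_{k,i}^{*}p_i+\boldsymbol{\Sigma}_k\Big)^{-1}\boldsymbol{g}_k,$$ where $\boldsymbol{g}_{m,i}=\boldsymbol{W}_m^{*}\boldsymbol{h}_{m,i}$, $\boldsymbol{g}_k\in\mathbb{C}^{|\mathcal{F}_k|L}$ stacks $\boldsymbol{g}_{m,k}$ over $m\in\mathcal{F}_k$, $\bar{\boldsymbol{g}}_{k,i}$ stacks $\mathbb{1}[i\in\mathcal{U}_m]\,\boldsymbol{g}_{m,i}$ over $m\in\mathcal{F}_k$, and $\boldsymbol{\Sigma}_k$ is block diagonal with blocks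 $\boldsymbol{\Sigma}_{k,m}=\sum_{i\notin\mathcal{U}_m}\boldsymbol{W}_m^{*}\boldsymbol{R}_{m,i}\boldsymbol{W}_m\,p_i+\sigma^2\boldsymbol{W}_m^{*}\boldsymbol{W}_m$, $m\in\mathcal{F}_k$. Suppose $\boldsymbol{W}_m=\boldsymbol{U}_m\boldsymbol{Q}_m$ with $\boldsymbol{U}_m\in\mathbb{C}^{N\times L}$ satisfying $\boldsymbol{U}_m^{*}\boldsymbol{U}_m=\boldsymbol{I}_L$. Then, for fixed $\boldsymbol{U}_1,\dots,\boldsymbol{U}_M$, every choice of nonsingular $\boldsymbol{Q}_m\in\mathbb{C}^{L\times L}$, $m=1,\dots,M$, yields the same value of $\mathrm{SINR}_k(\boldsymbol{W})$ (namely $\mathrm{SINR}_k(\boldsymbol{U})$), so any nonsingular $\boldsymbol{Q}=\mathrm{diag}(\boldsymbol{Q}_1,\dots,\boldsymbol{Q}_M)$ provides the maximum SINR.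
   Context: Hybrid analog-digital cell-free massive MIMO uplink. The unit-modulus constraint on the analog beamformer entries is disregarded here. ''Perfect CSI'' means the channel estimates equal the true channels, so the estimation error covariance is zero; the factorization $\boldsymbol{W}=\boldsymbol{U}\boldsymbol{Q}$ (with $\boldsymbol{U}=\mathrm{diag}(\boldsymbol{U}_m)$ semi-unitary, $\boldsymbol{Q}=\mathrm{diag}(\boldsymbol{Q}_m)$) arises from an SVD of $\boldsymbol{W}$. *)

(* Defs.v *)
(* Complex scalars: an arbitrary numClosedFieldType C
   (e.g. algC, or R[i] for a real closed field R). *)
From HB Require Import structures.
From mathcomp Require Import all_boot all_order all_algebra.
From mathcomp Require Export sesquilinear.
Set Implicit Arguments. Unset Strict Implicit. Unset Printing Implicit Defensive.
Import Order.TTheory GRing.Theory Num.Theory.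
Local Open Scope ring_scope.
Local Open Scope sesquilinear_scope.

Section HybridCF.
Variable C : numClosedFieldType.

Definition ctr m n (A : 'M[C]_(m, n)) : 'M[C]_(n, m) := A ^t*.

Definition herm_psd n (A : 'M[C]_n) : Prop :=
  ctr A = A /\ forall x : 'cV[C]_n, 0 <= (ctr x *m A *m x) 0 0.

Variables (M K N L : nat).
Variable Us : 'I_M -> {set 'I_K}.
Variable h : 'I_M -> 'I_K -> 'cV[C]_N.
Variable Rc : 'I_M -> 'I_K -> 'M[C]_N.
Variable p : 'I_K -> C.
Variable sigma2 : C.

Definition Fset (k : 'I_K) : {set 'I_M} := [set m | k \in Us m].

Definition gmi (W : 'I_M -> 'M[C]_(N, L)) (m : 'I_M) (i : 'I_K) : 'cV[C]_L :=
  ctr (W m) *m h m i.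

Definition Fidx (k : 'I_K) (j : 'I_#|Fset k|) : 'I_M := enum_val j.

Definition dimF (k : 'I_K) := (\sum_(j < #|Fset k|) L)%N.

Definition gk W (k : 'I_K) : 'cV[C]_(dimF k) :=
  \mxcol_(j < #|Fset k|) gmi W (Fidx j) k.

Definition gbar W (k i : 'I_K) : 'cV[C]_(dimF k) :=
  \mxcol_(j < #|Fset k|) ((i \in Us (Fidx j))%:R *: gmi W (Fidx j) i).

Definition Sigma_blk (W : 'I_M -> 'M[C]_(N, L)) (m : 'I_M) : 'M[C]_L :=
  \sum_(i < K | i \notin Us m) p i *: (ctr (W m) *m Rc m i *m W m) +
  sigma2 *: (ctr (W m) *m W m).

Definition Sigma_k W (k : 'I_K) : 'M[C]_(dimF k) :=
  \mxdiag_(j < #|Fset k|) Sigma_blk W (Fidx j).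

Definition SINR W (k : 'I_K) : C :=
  (ctr (gk W k) *m
     invmx (\sum_(i < K | i != k) p i *: (gbar W k i *m ctr (gbar W k i))
            + Sigma_k W k)
   *m gk W k) 0 0.

End HybridCF.

(* Main.v *)
Require Import Defs.
From HB Require Import structures.
From mathcomp Require Import all_boot all_order all_algebra.
Import Order.TTheory GRing.Theory Num.Theory.
Local Open Scope ring_scope.
Set Implicit Arguments. Unset Strict Implicit.

Section Aux.
Variable C : numClosedFieldType.

Lemma ctrE m n (A : 'M[C]_(m, n)) i j : ctr A i j = (A j i)^*.
Proof. by rewrite !mxE. Qed.

Lemma ctrM m n r (A : 'M[C]_(m, n)) (B : 'M[C]_(n, r)) :
  ctr (A *m B) = ctr B *m ctr A.
Proof.
apply/matrixP => i j; rewrite !mxE rmorph_sum; apply: eq_bigr => l _.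
by rewrite !mxE rmorphM mulrC.
Qed.

Lemma ctrK m n (A : 'M[C]_(m, n)) : ctr (ctr A) = A.
Proof. by apply/matrixP => i j; rewrite !mxE conjCK. Qed.

Lemma ctrD m n (A B : 'M[C]_(m, n)) : ctr (A + B) = ctr A + ctr B.
Proof. by apply/matrixP => i j; rewrite !mxE rmorphD. Qed.

Lemma ctrZ m n a (A : 'M[C]_(m, n)) : ctr (a *: A) = a^* *: ctr A.
Proof. by apply/matrixP => i j; rewrite !mxE rmorphM. Qed.

Lemma ctr1 n : ctr (1%:M : 'M[C]_n) = 1%:M.
Proof. by apply/matrixP => i j; rewrite !mxE eq_sym; case: eqP; rewrite ?rmorph1 ?rmorph0. Qed.

Lemma ctr_mxcol p (p_ : 'I_p -> nat) n (B_ : forall i, 'M[C]_(p_ i, n)) :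
  ctr (\mxcol_i B_ i) = \mxrow_i ctr (B_ i).
Proof. by apply/matrixP => i j; rewrite !mxE. Qed.

Lemma ctr_mxblock p q (p_ : 'I_p -> nat) (q_ : 'I_q -> nat)
  (B_ : forall i j, 'M[C]_(p_ i, q_ j)) :
  ctr (\mxblock_(i, j) B_ i j) = \mxblock_(i, j) ctr (B_ j i).
Proof. by apply/matrixP => i j; rewrite !mxE. Qed.

Lemma ctr_mxdiag p (p_ : 'I_p -> nat) (B_ : forall i, 'M[C]_(p_ i)) :
  ctr (\mxdiag_i B_ i) = \mxdiag_i ctr (B_ i).
Proof.
rewrite /mxdiag ctr_mxblock; apply/eq_mxblock => i j.
case: eqP => [->|ne]; rewrite ?eqxx ?conform_mx_id //.
case: eqP => [e|_]; first by case: ne.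
by apply/matrixP => a b; rewrite !mxE rmorph0.
Qed.

Lemma mxdiagM p (p_ : 'I_p -> nat) (A_ B_ : forall i, 'M[C]_(p_ i)) :
  \mxdiag_i A_ i *m \mxdiag_i B_ i = \mxdiag_i (A_ i *m B_ i).
Proof.
rewrite {2}/mxdiag mul_mxdiag_mxblock /mxdiag; apply/eq_mxblock => i j.
case: eqP => [<-|_]; rewrite ?conform_mx_id ?mulmx0 //.
Qed.


Definition psd0 n (A : 'M[C]_n) := forall x : 'cV[C]_n, 0 <= (ctr x *m A *m x) 0 0.

Lemma psd0_0 n : psd0 (0%R : 'M[C]_n).
Proof. by move=> x; rewrite mulmx0 mul0mx mxE. Qed.

Lemma psd0D n (A B : 'M[C]_n) : psd0 A -> psd0 B -> psd0 (A + B).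
Proof. by move=> hA hB x; rewrite mulmxDr mulmxDl mxE addr_ge0. Qed.

Lemma psd0Z n a (A : 'M[C]_n) : 0 <= a -> psd0 A -> psd0 (a *: A).
Proof. by move=> ha hA x; rewrite -scalemxAr -scalemxAl mxE mulr_ge0. Qed.

Lemma psd0_sum n (I : finType) (P : pred I) (F : I -> 'M[C]_n) :
  (forall i, P i -> psd0 (F i)) -> psd0 (\sum_(i | P i) F i).
Proof.
move=> h; apply: (big_ind (fun A : 'M[C]_n => psd0 A)); [exact: psd0_0 | exact: psd0D | exact: h].
Qed.

Lemma psd0_gg n (g : 'cV[C]_n) : psd0 (g *m ctr g).
Proof.
move=> x; rewrite !mulmxA -mulmxA mxE big_ord1.
have -> : ctr g *m x = ctr (ctr x *m g) by rewrite ctrM ctrK.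
by rewrite ctrE mul_conjC_ge0.
Qed.

Lemma psd0_conj n r (B : 'M[C]_(n, r)) (A : 'M[C]_n) : psd0 A -> psd0 (ctr B *m A *m B).
Proof. by move=> hA x; rewrite !mulmxA -ctrM -!mulmxA mulmxA; apply: hA. Qed.

Lemma psd0_mxdiag p (p_ : 'I_p -> nat) (B_ : forall i, 'M[C]_(p_ i)) :
  (forall i, psd0 (B_ i)) -> psd0 (\mxdiag_i B_ i).
Proof.
move=> h x; rewrite -(submxcolK x) ctr_mxcol mul_mxrow_mxdiag mul_mxrow_mxcol.
by rewrite summxE sumr_ge0 // => i _; apply: h.
Qed.

Lemma cnorm0 n (x : 'cV[C]_n) : (ctr x *m x) 0 0 = 0 -> x = 0.
Proof.
rewrite mxE => /eqP; rewrite psumr_eq0 => [/allP h|i _]; last first.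
  by rewrite ctrE mulrC mul_conjC_ge0.
apply/matrixP => i j; rewrite ord1 mxE.
by move: (h i (mem_index_enum i)) => /=; rewrite ctrE mulrC mul_conjC_eq0 => /eqP.
Qed.

Lemma scale_entry (a : C) m n (M : 'M[C]_(m, n)) i j : (a *: M) i j = a * M i j.
Proof. by rewrite mxE. Qed.

Lemma add_entry m n (M N : 'M[C]_(m, n)) i j : (M + N) i j = M i j + N i j.
Proof. by rewrite mxE. Qed.

Lemma pd_unit n (P : 'M[C]_n) s : psd0 P -> 0 < s -> P + s%:M \in unitmx.
Proof.
move=> hP hs; rewrite unitmxE unitfE -det_tr; apply/negP => /det0P [v vn0 vA].
have hx : (P + s%:M) *m v^T = 0 by rewrite -[_ *m _]trmxK trmx_mul trmxK vA trmx0.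
have : (ctr v^T *m (P + s%:M) *m v^T) 0 0 = 0 by rewrite -mulmxA hx mulmx0 mxE.
rewrite mulmxDr mulmxDl -scalemx1 -scalemxAr mulmx1 -scalemxAl.
rewrite add_entry scale_entry.
have h1 := hP v^T.
have h2 : 0 <= (ctr v^T *m v^T) 0 0.
  by rewrite mxE sumr_ge0 // => i _; rewrite ctrE mulrC mul_conjC_ge0.
have h3 : 0 <= s * (ctr v^T *m v^T) 0 0 by rewrite mulr_ge0 // ltW.
move/eqP; rewrite paddr_eq0 // => /andP [_].
rewrite mulf_eq0 gt_eqF //= => /eqP /cnorm0 /eqP; rewrite trmx_eq0.
by rewrite (negPf vn0).
Qed.


Lemma conj_inv n (E A F : 'M[C]_n) : E \in unitmx -> A \in unitmx -> F \in unitmx ->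
  F *m invmx (E *m A *m F) *m E = invmx A.
Proof.
move=> hE hA hF.
have hP : E *m A *m F \in unitmx by rewrite !unitmx_mul hE hA hF.
have e : invmx (E *m A *m F) = invmx F *m invmx A *m invmx E.
  rewrite -[RHS](mulKmx hP) -!mulmxA (mulmxA F) (mulmxV hF) mul1mx.
  by rewrite (mulmxA A) (mulmxV hA) mul1mx (mulmxV hE) mulmx1.
by rewrite e !mulmxA (mulmxV hF) mul1mx -mulmxA (mulVmx hE) mulmx1.
Qed.

End Aux.

Theorem proposition1 (C : numClosedFieldType) (M K N L : nat)
  (Us : 'I_M -> {set 'I_K})
  (h : 'I_M -> 'I_K -> 'cV[C]_N) (Rc : 'I_M -> 'I_K -> 'M[C]_N)
  (p : 'I_K -> C) (sigma2 : C)
  (hLN : (L <= N)%N)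
  (hp : forall i, 0 < p i) (hs : 0 < sigma2)
  (hR : forall m i, herm_psd (Rc m i))
  (U : 'I_M -> 'M[C]_(N, L))
  (hU : forall m, ctr (U m) *m U m = 1%:M)
  (Q : 'I_M -> 'M[C]_L)
  (hQ : forall m, Q m \in unitmx) :
  let W := fun m => U m *m Q m in
  forall k : 'I_K,
     SINR Us h Rc p sigma2 W k = SINR Us h Rc p sigma2 U k.
Proof.
move=> W k.
pose D := \mxdiag_(j < #|Fset Us k|) Q (Fidx j).
pose Dc := \mxdiag_(j < #|Fset Us k|) ctr (Q (Fidx j)).
have hg : gk Us h W k = Dc *m gk Us h U k.
  rewrite /gk mul_mxdiag_mxcol; apply: eq_mxcol => j.
  by rewrite /gmi /W ctrM mulmxA.
have hgb : forall i, gbar Us h W k i = Dc *m gbar Us h U k i.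
  move=> i; rewrite /gbar mul_mxdiag_mxcol; apply: eq_mxcol => j.
  by rewrite /gmi /W -scalemxAr ctrM mulmxA.
have hS : Sigma_k Us Rc p sigma2 W k = Dc *m Sigma_k Us Rc p sigma2 U k *m D.
  rewrite /Sigma_k !mxdiagM; apply: eq_mxdiag => j.
  rewrite /Sigma_blk /W mulmxDr mulmxDl mulmx_sumr mulmx_suml; congr (_ + _).
    apply: eq_bigr => i _.
    by rewrite -scalemxAr -scalemxAl ctrM !mulmxA.
  by rewrite -scalemxAr -scalemxAl ctrM !mulmxA.
have hcD : ctr Dc = D by rewrite ctr_mxdiag; apply: eq_mxdiag => j; rewrite ctrK.
set AU := (\sum_(i < K | i != k) p i *: (gbar Us h U k i *m ctr (gbar Us h U k i))
            + Sigma_k Us Rc p sigma2 U k).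
have hA : (\sum_(i < K | i != k) p i *: (gbar Us h W k i *m ctr (gbar Us h W k i))
            + Sigma_k Us Rc p sigma2 W k) = Dc *m AU *m D.
  rewrite hS /AU mulmxDr mulmxDl mulmx_sumr mulmx_suml; congr (_ + _).
  apply: eq_bigr => i _.
  by rewrite !hgb ctrM hcD -scalemxAr -scalemxAl !mulmxA.
have Dinv : D *m \mxdiag_(j < #|Fset Us k|) invmx (Q (Fidx j)) = 1%:M.
  by rewrite mxdiagM -(mxdiagZ 1); apply: eq_mxdiag => j; rewrite mulmxV.
have Dinv' : \mxdiag_(j < #|Fset Us k|) invmx (Q (Fidx j)) *m D = 1%:M.
  by rewrite mxdiagM -(mxdiagZ 1); apply: eq_mxdiag => j; rewrite mulVmx.
have uD : D \in unitmx by case: (mulmx1_unit Dinv).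
have uDc : Dc \in unitmx.
  have : Dc *m ctr (\mxdiag_(j < #|Fset Us k|) invmx (Q (Fidx j))) = 1%:M.
    have hcD' : Dc = ctr D by rewrite -hcD ctrK.
    by rewrite hcD' -ctrM Dinv' ctr1.
  by case/mulmx1_unit.
have uA : AU \in unitmx.
  have -> : AU = (\sum_(i < K | i != k) p i *: (gbar Us h U k i *m ctr (gbar Us h U k i))
     + \mxdiag_(j < #|Fset Us k|) (\sum_(i < K | i \notin Us (Fidx j))
            p i *: (ctr (U (Fidx j)) *m Rc (Fidx j) i *m U (Fidx j))))
     + sigma2%:M.
    rewrite /AU -addrA; congr (_ + _).
    rewrite /Sigma_k /Sigma_blk mxdiagD -(mxdiagZ sigma2); congr (_ + _).
    by apply: eq_mxdiag => j; rewrite hU scalemx1.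
  apply: pd_unit => //; apply: psd0D.
    apply: psd0_sum => i _; apply: psd0Z; first exact: ltW.
    exact: psd0_gg.
  apply: psd0_mxdiag => j; apply: psd0_sum => i _; apply: psd0Z; first exact: ltW.
  by apply: psd0_conj; case: (hR (Fidx j) i).
rewrite /SINR hA hg ctrM hcD.
have -> : ctr (gk Us h U k) *m D *m invmx (Dc *m AU *m D) *m (Dc *m gk Us h U k)
   = ctr (gk Us h U k) *m (D *m invmx (Dc *m AU *m D) *m Dc) *m gk Us h U k.
  by rewrite !mulmxA.
by rewrite conj_inv.
Qed.
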